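(* For $X\in\mathbb{L}^0(\mathbb{R},\mathcal{F})$ let $I(X)=E(X\mid\mathcal{H}):=E(X^+\mid\mathcal{H})-E(X^-\mid\mathcal{H})$. For $X,Y\in\mathbb{L}^0(\mathbb{R},\mathcal{F})$ we have $I(X+Y)=I(X)+I(Y)$ a.s. on the set $F=\bigcup_{i=1}^5F_i\in\mathcal{H}$, where $F_1=\{E(|X|\mid\mathcal{H})\in\mathbb{R},\ E(|Y|\mid\mathcal{H})\in\mathbb{R}\}$, $F_2=\{E(X^+\mid\mathcal{H})=+\infty,\ E(X^-\mid\mathcal{H})\in\mathbb{R},\ E(Y^-\mid\mathcal{H})\in\mathbb{R}\}$, $F_3=\{E(X^-\mid\mathcal{H})=+\infty,\ E(X^+\mid\mathcal{H})\in\mathbb{R},\ E(Y^+\mid\mathcal{H})\in\mathbb{R}\}$, $F_4=\{E(Y^+\mid\mathcal{H})=+\infty,\ E(X^-\mid\mathcal{H})\in\mathbb{R},\ E(Y^-\mid\mathcal{H})\in\mathbb{R}\}$, $F_5=\{E(Y^-\mid\mathcal{H})=+\infty,\ E(X^+\mid\mathcal{H})\in\mathbb{R},\ E(Y^+\mid\mathcal{H})\in\mathbb{R}\}$.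
   Context: Let $(\Omega,\mathcal{F},\mathbb{P})$ be a probability space with $\mathcal{F}$ complete and $\mathcal{H}\subseteq\mathcal{F}$ a complete sub-$\sigma$-algebra. $\mathbb{L}^0(\mathbb{R},\mathcal{F})$ is the set of real-valued $\mathcal{F}$-measurable random variables. For $Z\ge0$, $E(Z\mid\mathcal{H})$ denotes the (generalized) conditional expectation with values in $[0,+\infty]$. $X^+=\max(X,0)$, $X^-=\max(-X,0)$. Arithmetic on $\overline{\mathbb{R}}=\mathbb{R}\cup\{\pm\infty\}$ uses the conventions $r\pm\infty=\pm\infty$ for $r\in\mathbb{R}$, $\infty-\infty=0$, $\infty+\infty=\infty$, $0\times(\pm\infty)=0$. *)

(* Defs.v *)
From HB Require Import structures.
From mathcomp Require Import all_boot all_order all_algebra.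
From mathcomp Require Import all_classical all_reals all_analysis measurable_realfun.
Set Implicit Arguments. Unset Strict Implicit. Unset Printing Implicit Defensive.
Import Order.TTheory GRing.Theory Num.Theory.
Local Open Scope classical_set_scope.
Local Open Scope ring_scope.
Local Open Scope ereal_scope.

Definition padd (R : realType) (x y : \bar R) : \bar R :=
  match x, y with
  | +oo, -oo => 0
  | -oo, +oo => 0
  | _, _ => x + y
  end.

Definition psub (R : realType) (x y : \bar R) : \bar R := padd x (- y).

Definition is_sub_sigma_algebra (d : measure_display) (T : measurableType d)
    (H : set (set T)) :=
  sigma_algebra setT H /\ H `<=` measurable.

Definition complete_sub (d : measure_display) (T : measurableType d)
    (R : realType) (P : probability T R) (H : set (set T)) :=
  P.-negligible `<=` H.

Definition H_measurable (d : measure_display) (T : measurableType d)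
    (R : realType) (H : set (set T)) (W : T -> \bar R) :=
  forall B : set (\bar R), @measurable _ (\bar R) B -> H (W @^-1` B).

(* W is a version of the generalized conditional expectation E(Z | H) of the
   nonnegative F-measurable Z: W is [0,+oo]-valued, H-measurable and
   int_A Z dP = int_A W dP for every A in H. *)
Definition is_cond_exp (d : measure_display) (T : measurableType d)
    (R : realType) (P : probability T R) (H : set (set T))
    (Z : T -> R) (W : T -> \bar R) :=
  [/\ forall x, 0 <= W x,
      H_measurable H W &
      forall A, H A ->
        \int[P]_(x in A) (Z x)%:E = \int[P]_(x in A) W x].

Definition is_real (R : realType) (x : \bar R) : Prop := x \is a fin_num.

(* Main.v *)
Require Import Defs.
From HB Require Import structures.
From mathcomp Require Import all_boot all_order all_algebra.
From mathcomp Require Import all_classical all_reals all_analysis measurable_realfun.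
From mathcomp Require Import lra.
Import Order.TTheory GRing.Theory Num.Theory.
Local Open Scope classical_set_scope.
Local Open Scope ring_scope.



Lemma eqle {R : realType} {a b : R} : a = b -> (a <= b)%R.
Proof. by move=> ->. Qed.

Lemma maxc {R : realType} (a : R) :
  (Num.max a 0 = a /\ 0 <= a) \/ (Num.max a 0 = 0 /\ a <= 0).
Proof. by rewrite /Order.max; case: ltP => h; [right|left]; split => //; apply: ltW. Qed.

Lemma maxid {R : realType} (a : R) : (Num.max a 0 = a + Num.max (- a) 0)%R.
Proof. by case: (maxc a) => -[-> h]; case: (maxc (- a)) => -[-> h']; lra. Qed.

Lemma maxf {R : realType} (a : R) : (a <= Num.max a 0 /\ 0 <= Num.max a 0)%R.
Proof. by case: (maxc a) => -[-> h]; lra. Qed.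

Lemma cover_arith (R : realType) (r1 r2 : R) : 0 <= r2 -> r2 < r1 ->
  exists n k : nat, r2 <= k%:R / n.+1%:R /\ k.+1%:R / n.+1%:R <= r1.
Proof.
move=> r20 r21.
exists (Num.trunc (2 / (r1 - r2))), (Num.trunc (r2 * (Num.trunc (2 / (r1 - r2))).+1%:R)).+1.
set N := (Num.trunc (2 / (r1 - r2))).+1%:R.
have N0 : 0 < N by rewrite /N ltr0Sn.
have h1 : 2 / (r1 - r2) < N by exact: truncnS_gt.
have h1' : 2 < N * (r1 - r2).
  by rewrite -ltr_pdivrMr ?subr_gt0 // mulrC.
have h2 := truncnS_gt (r2 * N).
have h3 : (Num.trunc (r2 * N))%:R <= r2 * N.
  by rewrite truncn_le mulr_ge0 // ltW.
split.
  by rewrite ler_pdivlMr //; apply: ltW.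
rewrite ler_pdivrMr //.
rewrite -[(Num.trunc (r2 * N)).+2]addn1 natrD -[(Num.trunc (r2 * N)).+1]addn1 natrD.
nra.
Qed.
Local Open Scope ereal_scope.
Lemma finle {R : realType} {u v : \bar R} : 0 <= u -> u <= v -> v \is a fin_num -> u \is a fin_num.
Proof.
move=> u0 uv vf; rewrite ge0_fin_numE //; apply: le_lt_trans uv _.
by case: v vf => // r _; exact: ltry.
Qed.

Lemma key (R : realType) (sp sm xp xm yp ym xa ya : \bar R) :
  0 <= sp -> 0 <= sm -> 0 <= xp -> 0 <= xm -> 0 <= yp -> 0 <= ym ->
  xp <= xa -> xm <= xa -> yp <= ya -> ym <= ya ->
  sp <= xp + yp -> sm <= xm + ym -> sp + (xm + ym) = sm + (xp + yp) ->
  (xa \is a fin_num /\ ya \is a fin_num) \/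
      [/\ xp = +oo, xm \is a fin_num & ym \is a fin_num] \/
      [/\ xm = +oo, xp \is a fin_num & yp \is a fin_num] \/
      [/\ yp = +oo, xm \is a fin_num & ym \is a fin_num] \/
      [/\ ym = +oo, xp \is a fin_num & yp \is a fin_num] ->
  psub sp sm = padd (psub xp xm) (psub yp ym).
Proof.
move=> sp0 sm0 xp0 xm0 yp0 ym0 hxp hxm hyp hym hsp hsm heq [|[|[|[|]]]].
- move=> [fxa fya].
  have fxp := finle xp0 hxp fxa; have fxm := finle xm0 hxm fxa.
  have fyp := finle yp0 hyp fya; have fym := finle ym0 hym fya.
  have fsp := finle sp0 hsp ltac:(by rewrite fin_numD fxp fyp).
  have fsm := finle sm0 hsm ltac:(by rewrite fin_numD fxm fym).
  move: heq; rewrite -(fineK fsp) -(fineK fsm) -(fineK fxp) -(fineK fxm) -(fineK fyp) -(fineK fym).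
  move: (fine sp) (fine sm) (fine xp) (fine xm) (fine yp) (fine ym) => a b c e f g.
  rewrite -!EFinD => -[h] /=.
  rewrite /psub /padd /= -!EFinD; congr (_%:E); lra.
- move=> [exp fxm fym].
  have fsm := finle sm0 hsm ltac:(by rewrite fin_numD fxm fym).
  clear hsp hsm hxp hxm hyp hym.
  have hsp' : sp = +oo.
    move: heq; rewrite exp addye ?gt_eqF ?(lt_le_trans _ yp0) ?ltNy0 // addey ?fin_num_eq_ninfty ?gt_eqF ?(lt_le_trans _ sm0) ?ltNy0 //.
    rewrite -(fineK fxm) -(fineK fym) -EFinD.
    by case: sp sp0 => // r _; rewrite -EFinD.
  rewrite hsp' exp -(fineK fsm) -(fineK fxm) -(fineK fym).
  by clear heq; case: yp yp0 => [r||].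
- move=> [exm fxp fyp].
  have fsp := finle sp0 hsp ltac:(by rewrite fin_numD fxp fyp).
  clear hsp hsm hxp hxm hyp hym.
  have hsm' : sm = +oo.
    move: heq; rewrite exm addye ?gt_eqF ?(lt_le_trans _ ym0) ?ltNy0 // addey ?gt_eqF ?(lt_le_trans _ sp0) ?ltNy0 //.
    rewrite -(fineK fxp) -(fineK fyp) -EFinD.
    by case: sm sm0 => // r _; rewrite -EFinD.
  rewrite hsm' exm -(fineK fsp) -(fineK fxp) -(fineK fyp).
  by clear heq; case: ym ym0 => [r||].
- move=> [eyp fxm fym].
  have fsm := finle sm0 hsm ltac:(by rewrite fin_numD fxm fym).
  clear hsp hsm hxp hxm hyp hym.
  have hsp' : sp = +oo.
    move: heq; rewrite eyp addey ?gt_eqF ?(lt_le_trans _ xp0) ?ltNy0 // addey ?gt_eqF ?(lt_le_trans _ sm0) ?ltNy0 //.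
    rewrite -(fineK fxm) -(fineK fym) -EFinD.
    by case: sp sp0 => // r _; rewrite -EFinD.
  rewrite hsp' eyp -(fineK fsm) -(fineK fxm) -(fineK fym).
  by clear heq; case: xp xp0 => [r||].
- move=> [eym fxp fyp].
  have fsp := finle sp0 hsp ltac:(by rewrite fin_numD fxp fyp).
  clear hsp hsm hxp hxm hyp hym.
  have hsm' : sm = +oo.
    move: heq; rewrite eym addey ?gt_eqF ?(lt_le_trans _ xm0) ?ltNy0 // addey ?gt_eqF ?(lt_le_trans _ sp0) ?ltNy0 //.
    rewrite -(fineK fxp) -(fineK fyp) -EFinD.
    by case: sm sm0 => // r _; rewrite -EFinD.
  rewrite hsm' eym -(fineK fsp) -(fineK fxp) -(fineK fyp).
  by clear heq; case: xm xm0 => [r||].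
Qed.

Section S.
Context d (T : measurableType d) (R : realType) (P : probability T R) (H : set (set T)).
Hypothesis HS : is_sub_sigma_algebra H.

Lemma HmeasE (W : T -> \bar R) :
  H_measurable H W <-> measurable_fun [set: g_sigma_algebraType H] W.
Proof.
have E := measurable_g_measurableTypeE HS.1.
split=> [hW _ B mB|hW B mB].
  rewrite setTI. rewrite E. exact: hW.
have := hW measurableT B mB. by rewrite setTI E.
Qed.

Lemma H_I (A B : set T) : H A -> H B -> H (A `&` B).
Proof.
have E := measurable_g_measurableTypeE HS.1.
rewrite -E => hA hB; exact: (@measurableI _ (g_sigma_algebraType H)).
Qed.

Lemma H_U (A B : set T) : H A -> H B -> H (A `|` B).
Proof.
have E := measurable_g_measurableTypeE HS.1.
rewrite -E => hA hB; exact: (@measurableU _ (g_sigma_algebraType H)).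
Qed.

Lemma HmeasD (W1 W2 : T -> \bar R) : H_measurable H W1 -> H_measurable H W2 ->
  H_measurable H (W1 \+ W2).
Proof. move=> /HmeasE h1 /HmeasE h2; apply/HmeasE; exact: emeasurable_funD. Qed.

Lemma Hmeas_meas (W : T -> \bar R) : H_measurable H W -> measurable_fun setT W.
Proof. move=> hW _ B mB; rewrite setTI; apply: HS.2; exact: hW. Qed.

Lemma H_le (W : T -> \bar R) (c : \bar R) : H_measurable H W -> H [set x | W x <= c].
Proof.
move=> /HmeasE hW.
have := @measurable_lee _ (g_sigma_algebraType H) R setT measurableT W (cst c) hW (measurable_cst _).
by rewrite setTI measurable_g_measurableTypeE //; case: HS.
Qed.

Lemma H_ge (W : T -> \bar R) (c : \bar R) : H_measurable H W -> H [set x | c <= W x].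
Proof.
move=> /HmeasE hW.
have := @measurable_lee _ (g_sigma_algebraType H) R setT measurableT (cst c) W (measurable_cst _) hW.
by rewrite setTI measurable_g_measurableTypeE //; case: HS.
Qed.

Lemma cmp_ae (W1 W2 : T -> \bar R) :
  (forall x, 0 <= W1 x) -> (forall x, 0 <= W2 x) ->
  H_measurable H W1 -> H_measurable H W2 ->
  (forall A, H A -> \int[P]_(x in A) W1 x <= \int[P]_(x in A) W2 x) ->
  {ae P, forall x, W1 x <= W2 x}.
Proof.
move=> W10 W20 hW1 hW2 hint.
pose A (n k : nat) := [set x | W2 x <= (k%:R / n.+1%:R)%:E] `&`
                      [set x | ((k.+1)%:R / n.+1%:R)%:E <= W1 x].
have HA n k : H (A n k).
  by apply: H_I; [exact: H_le|exact: H_ge].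
have PA n k : P (A n k) = 0.
  have mA := HS.2 _ (HA n k).
  have := hint _ (HA n k).
  pose c1 : R := (k%:R / n.+1%:R)%R; pose c2 : R := ((k.+1)%:R / n.+1%:R)%R.
  have c12 : (c1 < c2)%R.
    by rewrite /c1 /c2 ltr_pM2r ?invr_gt0 ?ltr0Sn // ltr_nat.
  have c10 : (0 <= c1)%R by rewrite /c1 divr_ge0.
  have le1 : (c2%:E * P (A n k) <= \int[P]_(x in A n k) W1 x).
    rewrite -integral_cst //; apply: ge0_le_integral => //.
    - by move=> x _; rewrite lee_fin; apply: le_trans (ltW c12).
    - exact: (measurable_funS measurableT (@subsetT _ _) (@Hmeas_meas W1 hW1)).
    - by move=> x [_ h].
  have le2 : (\int[P]_(x in A n k) W2 x <= c1%:E * P (A n k)).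
    rewrite -integral_cst //; apply: ge0_le_integral => //.
    - exact: (measurable_funS measurableT (@subsetT _ _) (@Hmeas_meas W2 hW2)).
    - by move=> x [h _].
  move=> h.
  have := le_trans le1 (le_trans h le2).
  have : P (A n k) \is a fin_num by rewrite fin_num_measure.
  have : 0 <= P (A n k) by [].
  case: (P (A n k)) => [p| |] //= p0 _.
  rewrite -!EFinM lee_fin => hp; congr (_%:E).
  rewrite lee_fin in p0.
  nra.
apply: (@negligibleS _ _ _ _ (\bigcup_n \bigcup_k A n k)).
  move=> x /= /negP; rewrite -ltNge => hx.
  have x20 := W20 x.
  have [r2 e2] : exists r2, W2 x = r2%:E.
    move: hx x20; case: (W2 x) => [r| |] //; by [exists r | case: (W1 x)].
  have [r1 [h12 e1]] : exists r1, (r2 < r1)%R /\ r1%:E <= W1 x.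
    move: hx; rewrite e2; case: (W1 x) => [r| |] //.
      by rewrite lte_fin => h; exists r.
    by move=> _; exists (r2 + 1)%R; split; [rewrite ltrDl ltr01 | exact: leey].
  have [n [k [hk1 hk2]]] := @cover_arith R r1 r2 ltac:(by rewrite -lee_fin -e2) h12.
  exists n => //; exists k => //; split => /=.
    by rewrite e2 lee_fin.
  by apply: le_trans e1; rewrite lee_fin.
apply: negligible_bigcup => n; apply: negligible_bigcup => k.
by exists (A n k); split => //; [apply: HS.2; exact: HA | exact: PA]. Qed.


Lemma mEF (Z : T -> R) (A : set T) : measurable_fun setT Z ->
  measurable_fun A (fun x => (Z x)%:E).
Proof.
move=> mZ; apply/measurable_EFinP.
exact: (measurable_funS measurableT (@subsetT _ _) mZ).
Qed.

Lemma mW (W : T -> \bar R) (A : set T) : H_measurable H W -> measurable_fun A W.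
Proof.
move=> hW; exact: (measurable_funS measurableT (@subsetT _ _) (@Hmeas_meas W hW)).
Qed.

Lemma cond_add (Z1 Z2 : T -> R) (W1 W2 : T -> \bar R) :
  (forall x, 0 <= Z1 x)%R -> (forall x, 0 <= Z2 x)%R ->
  measurable_fun setT Z1 -> measurable_fun setT Z2 ->
  is_cond_exp P H Z1 W1 -> is_cond_exp P H Z2 W2 ->
  is_cond_exp P H (fun x => Z1 x + Z2 x)%R (W1 \+ W2).
Proof.
move=> Z10 Z20 mZ1 mZ2 [W10 hW1 iW1] [W20 hW2 iW2]; split.
- by move=> x; apply: adde_ge0.
- exact: HmeasD.
- move=> A HA; have mA := HS.2 _ HA.
  under eq_integral do rewrite EFinD.
  rewrite ge0_integralD //; first last.
  + exact: mEF.
  + by move=> x _; rewrite lee_fin.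
  + exact: mEF.
  + by move=> x _; rewrite lee_fin.
  rewrite iW1 // iW2 // ge0_integralD //.
  + exact: mW.
  + exact: mW.
Qed.

Lemma cond_le (Z1 Z2 : T -> R) (W1 W2 : T -> \bar R) :
  (forall x, 0 <= Z1 x)%R -> (forall x, Z1 x <= Z2 x)%R ->
  measurable_fun setT Z1 -> measurable_fun setT Z2 ->
  is_cond_exp P H Z1 W1 -> is_cond_exp P H Z2 W2 ->
  {ae P, forall x, W1 x <= W2 x}.
Proof.
move=> Z10 Z12 mZ1 mZ2 [W10 hW1 iW1] [W20 hW2 iW2].
apply: cmp_ae => // A HA; have mA := HS.2 _ HA.
rewrite -iW1 // -iW2 //; apply: ge0_le_integral => //.
- by move=> x _; rewrite lee_fin.
- exact: mEF.
- exact: mEF.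
- by move=> x _; rewrite lee_fin.
Qed.

Lemma H_fin (W : T -> \bar R) : (forall x, 0 <= W x) -> H_measurable H W ->
  H [set x | is_real (W x)].
Proof.
move=> W0 hW.
have -> : [set x | is_real (W x)] = ~` [set x | +oo <= W x].
  apply/seteqP; split => x /=; rewrite /is_real ge0_fin_numE // ltey leye_eq.
    by move/negP.
  by move/negP.
rewrite -(measurable_g_measurableTypeE HS.1).
apply: (@measurableC _ (g_sigma_algebraType H)).
rewrite (measurable_g_measurableTypeE HS.1); exact: H_ge.
Qed.

Lemma H_eqy (W : T -> \bar R) : H_measurable H W -> H [set x | W x = +oo].
Proof.
move=> hW.
have -> : [set x | W x = +oo] = [set x | +oo <= W x].
  apply/seteqP; split => x /=; rewrite leye_eq; first by move=> ->.
  by move/eqP.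
exact: H_ge.
Qed.

End S.
Arguments cond_le {d T R P H} HS {Z1 Z2 W1 W2}.
Arguments cond_add {d T R P H} HS {Z1 Z2 W1 W2}.
Arguments H_U {d T H} HS {A B}.
Arguments H_I {d T H} HS {A B}.
Arguments H_fin {d T R H} HS {W}.
Arguments H_eqy {d T R H} HS {W}.

Theorem mainTheorem17 (d : measure_display) (T : measurableType d)
  (R : realType) (P : probability T R) (H : set (set T))
  (X Y : T -> R)
  (EXp EXm EYp EYm EXa EYa ESp ESm : T -> \bar R) :
  measure_is_complete P ->
  is_sub_sigma_algebra H ->
  complete_sub P H ->
  measurable_fun setT X -> measurable_fun setT Y ->
  is_cond_exp P H (fun x => (Num.max (X x) 0%R)%R) EXp ->
  is_cond_exp P H (fun x => (Num.max (- X x) 0%R)%R) EXm ->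
  is_cond_exp P H (fun x => (Num.max (Y x) 0%R)%R) EYp ->
  is_cond_exp P H (fun x => (Num.max (- Y x) 0%R)%R) EYm ->
  is_cond_exp P H (fun x => (`|X x|%R)%R) EXa ->
  is_cond_exp P H (fun x => (`|Y x|%R)%R) EYa ->
  is_cond_exp P H (fun x => (Num.max (X x + Y x) 0%R)%R) ESp ->
  is_cond_exp P H (fun x => (Num.max (- (X x + Y x)) 0%R)%R) ESm ->
  let F1 := [set x | is_real (EXa x) /\ is_real (EYa x)] in
  let F2 := [set x | EXp x = +oo /\ is_real (EXm x) /\ is_real (EYm x)] in
  let F3 := [set x | EXm x = +oo /\ is_real (EXp x) /\ is_real (EYp x)] in
  let F4 := [set x | EYp x = +oo /\ is_real (EXm x) /\ is_real (EYm x)] in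
  let F5 := [set x | EYm x = +oo /\ is_real (EXp x) /\ is_real (EYp x)] in
  let F := F1 `|` F2 `|` F3 `|` F4 `|` F5 in
  H F /\
  {ae P, forall x, F x ->
     psub (ESp x) (ESm x) = padd (psub (EXp x) (EXm x)) (psub (EYp x) (EYm x))}.
Proof.
move=> Pc HS Hc mX mY cXp cXm cYp cYm cXa cYa cSp cSm F1 F2 F3 F4 F5 F.
have mXp : measurable_fun setT (fun x => (Num.max (X x) 0%R)%R) := measurable_maxr mX (@measurable_cst _ _ T R setT 0%R).
have mXm : measurable_fun setT (fun x => (Num.max (- X x) 0%R)%R) := measurable_maxr (measurable_funN mX) (@measurable_cst _ _ T R setT 0%R).
have mYp : measurable_fun setT (fun x => (Num.max (Y x) 0%R)%R) := measurable_maxr mY (@measurable_cst _ _ T R setT 0%R).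
have mYm : measurable_fun setT (fun x => (Num.max (- Y x) 0%R)%R) := measurable_maxr (measurable_funN mY) (@measurable_cst _ _ T R setT 0%R).
have mS : measurable_fun setT (fun x => X x + Y x)%R := measurable_funD mX mY.
have mSp : measurable_fun setT (fun x => (Num.max (X x + Y x) 0%R)%R) := measurable_maxr mS (@measurable_cst _ _ T R setT 0%R).
have mSm : measurable_fun setT (fun x => (Num.max (- (X x + Y x)) 0%R)%R) := measurable_maxr (measurable_funN mS) (@measurable_cst _ _ T R setT 0%R).
have mXa : measurable_fun setT (fun x => (`|X x|%R)%R) := measurableT_comp (@normr_measurable R setT) mX.
have mYa : measurable_fun setT (fun x => (`|Y x|%R)%R) := measurableT_comp (@normr_measurable R setT) mY.
have p0 (a : R) : (0 <= Num.max a 0)%R by case: (maxf a).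
have cap (a : R) : (Num.max a 0 <= `|a|)%R.
  by case: (maxc a) => -[-> _]; rewrite ?ler_norm ?normr_ge0.
have cam (a : R) : (Num.max (- a) 0 <= `|a|)%R.
  by case: (maxc (- a)) => -[-> _]; rewrite ?normr_ge0 // -normrN ler_norm.
have h1 := cond_le HS (fun x => p0 (X x)) (fun x => cap (X x)) mXp mXa cXp cXa.
have h2 := cond_le HS (fun x => p0 (- X x)%R) (fun x => cam (X x)) mXm mXa cXm cXa.
have h3 := cond_le HS (fun x => p0 (Y x)) (fun x => cap (Y x)) mYp mYa cYp cYa.
have h4 := cond_le HS (fun x => p0 (- Y x)%R) (fun x => cam (Y x)) mYm mYa cYm cYa.
have cXY := cond_add HS (fun x => p0 (X x)) (fun x => p0 (Y x)) mXp mYp cXp cYp.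
have cXYm := cond_add HS (fun x => p0 (- X x)%R) (fun x => p0 (- Y x)%R) mXm mYm cXm cYm.
have h5 : {ae P, forall x, ESp x <= (EXp \+ EYp) x}.
  apply: (cond_le HS (fun x => p0 _) _ mSp (measurable_funD mXp mYp) cSp cXY) => x.
  have [? ?] := maxf (X x); have [? ?] := maxf (Y x).
  by case: (maxc (X x + Y x)) => -[-> ?] /=; lra.
have h6 : {ae P, forall x, ESm x <= (EXm \+ EYm) x}.
  apply: (cond_le HS (fun x => p0 _) _ mSm (measurable_funD mXm mYm) cSm cXYm) => x.
  have [? ?] := maxf (- X x); have [? ?] := maxf (- Y x).
  by case: (maxc (- (X x + Y x))) => -[-> ?] /=; lra.
have pp0 (Z1 Z2 : T -> R) : (forall x, 0 <= Z1 x)%R -> (forall x, 0 <= Z2 x)%R -> forall x, (0 <= Z1 x + Z2 x)%R.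
  by move=> a b x; apply: addr_ge0.
have cL := cond_add HS (fun x => p0 _) (pp0 _ _ (fun x => p0 _) (fun x => p0 _)) mSp (measurable_funD mXm mYm) cSp cXYm.
have cR := cond_add HS (fun x => p0 _) (pp0 _ _ (fun x => p0 _) (fun x => p0 _)) mSm (measurable_funD mXp mYp) cSm cXY.
have eqZ x : (Num.max (X x + Y x) 0 + (Num.max (- X x) 0 + Num.max (- Y x) 0) =
              Num.max (- (X x + Y x)) 0 + (Num.max (X x) 0 + Num.max (Y x) 0))%R.
  rewrite (maxid (X x)) (maxid (Y x)) (maxid (X x + Y x)); lra.
have h7 := cond_le HS (pp0 _ _ (fun x => p0 _) (fun x => pp0 _ _ (fun x => p0 _) (fun x => p0 _) x))
  (fun x => eqle (eqZ x)) (measurable_funD mSp (measurable_funD mXm mYm))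
  (measurable_funD mSm (measurable_funD mXp mYp)) cL cR.
have h8 := cond_le HS (pp0 _ _ (fun x => p0 _) (fun x => pp0 _ _ (fun x => p0 _) (fun x => p0 _) x))
  (fun x => eqle (esym (eqZ x))) (measurable_funD mSm (measurable_funD mXp mYp))
  (measurable_funD mSp (measurable_funD mXm mYm)) cR cL.
case: cXp => [Xp0 hXp _]; case: cXm => [Xm0 hXm _]; case: cYp => [Yp0 hYp _].
case: cYm => [Ym0 hYm _]; case: cXa => [Xa0 hXa _]; case: cYa => [Ya0 hYa _].
case: cSp => [Sp0 hSp _]; case: cSm => [Sm0 hSm _].
split.
  apply: H_U => //; [apply: H_U => //; [apply: H_U => //; [apply: H_U => //|]|]|].
  - exact: (H_I HS (H_fin HS Xa0 hXa) (H_fin HS Ya0 hYa)).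
  - exact: (H_I HS (H_eqy HS hXp) (H_I HS (H_fin HS Xm0 hXm) (H_fin HS Ym0 hYm))).
  - exact: (H_I HS (H_eqy HS hXm) (H_I HS (H_fin HS Xp0 hXp) (H_fin HS Yp0 hYp))).
  - exact: (H_I HS (H_eqy HS hYp) (H_I HS (H_fin HS Xm0 hXm) (H_fin HS Ym0 hYm))).
  - exact: (H_I HS (H_eqy HS hYm) (H_I HS (H_fin HS Xp0 hXp) (H_fin HS Yp0 hYp))).
apply: (filter_app _ _ h8); apply: (filter_app _ _ h7); apply: (filter_app _ _ h6).
apply: (filter_app _ _ h5); apply: (filter_app _ _ h4); apply: (filter_app _ _ h3).
apply: (filter_app _ _ h2); apply: (filter_app _ _ h1).
apply: aeW => x e1 e2 e3 e4 e5 e6 e7 e8 Fx.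
apply: (@key R (ESp x) (ESm x) (EXp x) (EXm x) (EYp x) (EYm x) (EXa x) (EYa x)) => //.
- by apply: le_anti; rewrite e7 e8.
- move: Fx => [[[[f1|[a [b c]]]|[a [b c]]]|[a [b c]]]|[a [b c]]].
  + by left.
  + by right; left.
  + by right; right; left.
  + by right; right; right; left.
  + by right; right; right; right.
Qed.
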